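(* Let $S_X,S_Y$ be finite nonempty action sets and $\varphi:S_X\times S_Y\to\mathbb{R}$. Suppose $\sigma_X:\mathcal{H}\to\Delta(S_X)$ is a $(\varphi,1)$-autocratic behavioral strategy for $X$ of arbitrary memory. Then there exists a two-point reactive learning strategy for $X$ that is also $(\varphi,1)$-autocratic.
   Context: Two players $X,Y$ play a repeated game with finite action sets $S_X,S_Y$; $\Delta(S)$ denotes the probability distributions on $S$. $\varphi$ is extended to mixed actions in its first argument by $\varphi(\tau_X,s_Y)=\mathbb{E}_{s_X\sim\tau_X}[\varphi(s_X,s_Y)]$. Histories: $\mathcal{H}=\bigcup_{T\ge0}(S_X\times S_Y)^T$. A behavioral strategy for $X$ is a map $\sigma_X:\mathcal{H}\to\Delta(S_X)$, similarly for $Y$; in each round $t$ players independently draw actions from their strategies evaluated at the history of realized action pairs of rounds $0,\dots,t-1$, and $\mathbb{E}_{\sigma_X,\sigma_Y}$ is the expectation over the resulting play. $\sigma_X$ is $(\varphi,1)$-autocratic if for every behavioral strategy $\sigma_Y$ of $Y$ the Cesàro limit $\lim_{T\to\infty}\frac{1}{T+1}\sum_{t=0}^T\mathbb{E}_{\sigma_X,\sigma_Y}[\varphi(s_X^t,s_Y^t)]$ exists and equals $0$. A reactive learning strategy for $X$ is a pair $(\sigma_X^0,\sigma_X^* )$ with $\sigma_X^0\in\Delta(S_X)$ and $\sigma_X^*:\Delta(S_X)\times S_Y\to\Delta(S_X)$, played by using $\tau_X^0=\sigma_X^0$ in round $0$ and $\tau_X^{t+1}=\sigma_X^*[\tau_X^t,s_Y^t]$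 in round $t+1$, where $s_Y^t$ is $Y$'s realized action in round $t$. It is two-point if there exist $\tau_X^\pm\in\Delta(S_X)$, $p_0\in[0,1]$, $p^*:[0,1]\times S_Y\to[0,1]$ with $\sigma_X^0=p_0\tau_X^++(1-p_0)\tau_X^-$ and $\sigma_X^*[p\tau_X^++(1-p)\tau_X^-,s_Y]=p^*[p,s_Y]\tau_X^++(1-p^*[p,s_Y])\tau_X^-$ for all $p\in[0,1]$, $s_Y\in S_Y$. *)

(* Defs.v *)
From HB Require Import structures.
From mathcomp Require Import all_boot all_order all_algebra.
From mathcomp Require Import all_classical all_reals all_analysis.
Set Implicit Arguments. Unset Strict Implicit. Unset Printing Implicit Defensive.
Import Order.TTheory GRing.Theory Num.Theory.
Import numFieldNormedType.Exports.
Local Open Scope classical_set_scope.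
Local Open Scope ring_scope.

Definition is_dist (R : realType) (S : finType) (f : {ffun S -> R}) : bool :=
  [forall s, 0 <= f s] && (\sum_(s : S) f s == 1).
Definition dist (R : realType) (S : finType) := {f : {ffun S -> R} | is_dist f}.

(* Histories: chronological sequences of realized action pairs
   (s_X^0,s_Y^0), ..., (s_X^{T-1},s_Y^{T-1}). *)
Definition history (SX SY : finType) := seq (SX * SY).

Definition stratX (R : realType) (SX SY : finType) := history SX SY -> dist R SX.
Definition stratY (R : realType) (SX SY : finType) := history SX SY -> dist R SY.

Fixpoint prob_from (R : realType) (SX SY : finType)
    (sX : stratX R SX SY) (sY : stratY R SX SY)
    (pre : history SX SY) (h : history SX SY) : R :=
  match h with
  | [::] => 1
  | p :: h' => val (sX pre) p.1 * val (sY pre) p.2 *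
               prob_from sX sY (rcons pre p) h'
  end.

Definition hist_prob (R : realType) (SX SY : finType)
    (sX : stratX R SX SY) (sY : stratY R SX SY) (h : history SX SY) : R :=
  prob_from sX sY [::] h.

Definition exp_payoff (R : realType) (SX SY : finType) (phi : SX -> SY -> R)
    (sX : stratX R SX SY) (sY : stratY R SX SY) (t : nat) : R :=
  \sum_(h : (t.+1).-tuple (SX * SY))
     hist_prob sX sY (tval h) * phi (tnth h ord_max).1 (tnth h ord_max).2.

Definition autocratic (R : realType) (SX SY : finType) (phi : SX -> SY -> R)
    (sX : stratX R SX SY) : Prop :=
  forall sY : stratY R SX SY,
    (fun T : nat => (T.+1)%:R^-1 * \sum_(t < T.+1) exp_payoff phi sX sY t)
      @ \oo --> (0 : R).

Definition reactive (R : realType) (SX SY : finType)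
    (sigma0 : dist R SX) (sigmastar : dist R SX -> SY -> dist R SX)
    : stratX R SX SY :=
  fun h => foldl (fun tau p => sigmastar tau p.2) sigma0 h.

Definition mix (R : realType) (S : finType) (p : R) (tp tm : dist R S)
    : {ffun S -> R} :=
  [ffun s => p * val tp s + (1 - p) * val tm s].

Definition two_point (R : realType) (SX SY : finType)
    (sigma0 : dist R SX) (sigmastar : dist R SX -> SY -> dist R SX) : Prop :=
  exists (tp tm : dist R SX) (p0 : R) (pstar : R -> SY -> R),
    [/\ 0 <= p0 <= 1,
        (forall p y, 0 <= p <= 1 -> 0 <= pstar p y <= 1),
        val sigma0 = mix p0 tp tm &
        forall p y (tau : dist R SX), 0 <= p <= 1 -> val tau = mix p tp tm ->
          val (sigmastar tau y) = mix (pstar p y) tp tm].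

(* Main.v *)
Require Import Defs.
From HB Require Import structures.
From mathcomp Require Import all_boot all_order all_algebra.
From mathcomp Require Import all_classical all_reals all_analysis.
From mathcomp Require Import ring lra.
Set Implicit Arguments. Unset Strict Implicit. Unset Printing Implicit Defensive.
Import Order.TTheory GRing.Theory Num.Theory.
Import numFieldNormedType.Exports.
Local Open Scope classical_set_scope.
Local Open Scope ring_scope.

Section C.
Variables (R : realType) (SX SY : finType) (phi : SX -> SY -> R).
Definition lin (f : {ffun SX -> R}) y := \sum_x f x * phi x y.
Lemma dist_le1 (t : dist R SX) x : 0 <= val t x <= 1.
Proof.
case: t => f /= /andP[/forallP H /eqP H1]; rewrite H /= -H1.
by rewrite (bigD1 x) //= lerDl sumr_ge0.
Qed.

Variables (tp tm : dist R SX).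
Hypothesis Htp : forall y, 0 <= lin (val tp) y.
Hypothesis Htm : forall y, lin (val tm) y <= 0.

Definition M := 1 + \sum_x \sum_y `|phi x y|.
Definition eta := M^-1.

Lemma M_gt0 : 0 < M.
Proof. by rewrite /M ltr_wpDr // !sumr_ge0 // => x _; rewrite sumr_ge0. Qed.

Lemma lin_bound (t : dist R SX) y : `|lin (val t) y| <= M.
Proof.
rewrite /lin (le_trans (ler_norm_sum _ _ _)) // /M.
rewrite -[X in X <= _]add0r; apply: lerD => //; apply: ler_sum => x _.
rewrite normrM (bigD1 y) //=.
have := dist_le1 t x => /andP[t0 t1].
rewrite ger0_norm // (le_trans (ler_piMl _ t1)) // lerDl sumr_ge0 //.
Qed.

Lemma mix_dist q : 0 <= q <= 1 -> is_dist (mix q tp tm).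
Proof.
move=> /andP[q0 q1]; apply/andP; split.
  apply/forallP => s; rewrite ffunE.
  have /andP[? _] := dist_le1 tp s; have /andP[? _] := dist_le1 tm s.
  by rewrite addr_ge0 // mulr_ge0 // subr_ge0.
apply/eqP.
under eq_bigr do rewrite ffunE.
rewrite big_split /= -!mulr_sumr.
case: tp => f /= /andP[_ /eqP ->]; case: tm => g /= /andP[_ /eqP ->].
by rewrite !mulr1 addrC subrK.
Qed.

Lemma lin_mix p y : lin (mix p tp tm) y = p * lin (val tp) y + (1 - p) * lin (val tm) y.
Proof.
rewrite /lin !mulr_sumr -big_split; apply: eq_bigr => x _ /=.
rewrite ffunE; ring.
Qed.

Definition pstar p y := p - eta * (p * lin (val tp) y + (1 - p) * lin (val tm) y).

Lemma pstar_range p y : 0 <= p <= 1 -> 0 <= pstar p y <= 1.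
Proof.
move=> /andP[p0 p1].
have := lin_bound tp y; have := lin_bound tm y.
have := Htp y; have := Htm y.
rewrite /pstar /eta.
set a := lin _ y; set b := lin _ y.
move=> hb ha; rewrite (ger0_norm ha) (ler0_norm hb) => Hb Ha.
have M0 := M_gt0.
have e0 : 0 < M^-1 by rewrite invr_gt0.
have ea : M^-1 * b <= 1 by rewrite mulrC ler_pdivrMr // mul1r.
have eb : M^-1 * (- a) <= 1 by rewrite mulrC ler_pdivrMr // mul1r.
have ea0 : 0 <= M^-1 * b by rewrite mulr_ge0 // ltW.
have eb0 : 0 <= M^-1 * (- a) by rewrite mulr_ge0 // ?oppr_ge0 // ltW.
apply/andP; split; nra.
Qed.

Definition mkd q (H : 0 <= q <= 1) : dist R SX := exist (fun f => is_dist f) _ (mix_dist H).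

Definition sigmastar (t : dist R SX) (y : SY) : dist R SX :=
  match pselect (exists p, (0 <= p <= 1) /\ val t = mix p tp tm) with
  | left H => let p := projT1 (cid H) in
              mkd (pstar_range y (proj1 (projT2 (cid H))))
  | right _ => t
  end.

Lemma mix_pstar p p' y : mix p tp tm = mix p' tp tm ->
  mix (pstar p y) tp tm = mix (pstar p' y) tp tm.
Proof.
move=> e; rewrite /pstar -!lin_mix e.
apply/ffunP => s; have : mix p tp tm s = mix p' tp tm s by rewrite e.
rewrite !ffunE => Hs.
set L := lin _ y.
nra.
Qed.

Lemma sig_spec (t : dist R SX) q y : 0 <= q <= 1 -> val t = mix q tp tm ->
  val (sigmastar t y) = mix (pstar q y) tp tm.
Proof.
move=> q01 e; rewrite /sigmastar; case: pselect => [H|H]; last first.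
  by exfalso; apply: H; exists q.
case: (cid H) => p' [r' e'] /=.
by apply: mix_pstar; rewrite -e -e'.
Qed.

Lemma zero01 : 0 <= (0 : R) <= 1.
Proof. by rewrite lexx ler01. Qed.

Definition sigma0 := mkd zero01.

Definition P (h : history SX SY) := foldl (fun q p => pstar q p.2) 0 h.

Lemma fold_spec (h : history SX SY) : forall (t : dist R SX) q, 0 <= q <= 1 -> val t = mix q tp tm ->
  0 <= foldl (fun q (p : SX * SY) => pstar q p.2) q h <= 1 /\
  val (foldl (fun tau p => sigmastar tau p.2) t h) = mix (foldl (fun q p => pstar q p.2) q h) tp tm.
Proof.
elim: h => [|p h IH] t q q01 e //=.
apply: IH; first exact: pstar_range.
exact: sig_spec.
Qed.

Lemma reactive_P h : 0 <= P h <= 1 /\ val (reactive sigma0 sigmastar h) = mix (P h) tp tm.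
Proof. by apply: fold_spec; [exact: zero01 | by []]. Qed.

Lemma two_point_ok : two_point sigma0 sigmastar.
Proof.
exists tp, tm, 0, pstar; split => //.
- exact: zero01.
- by move=> p y; apply: pstar_range.
- by move=> p y t; apply: sig_spec.
Qed.
End C.

Section A.
Variables (R : realType) (SX SY : finType).
Let n := #|SX|.

Lemma W_cont (c : SX -> R) : continuous (fun v : 'rV[R]_n => \sum_x v ord0 (enum_rank x) * c x).
Proof.
elim: (index_enum SX) => [|x s IH].
  rewrite (_ : (fun _ => _) = fun=> 0); last by apply/funext => v; rewrite big_nil.
  exact: cst_continuous.
rewrite (_ : (fun _ => _) = (fun v : 'rV[R]_n => v ord0 (enum_rank x) * c x) +
   (fun v => \sum_(j <- s) v ord0 (enum_rank j) * c j)); last first.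
  by apply/funext => v; rewrite big_cons.
move=> v.
apply: continuousD => //.
apply: (continuousM (s := fun v : 'rV[R]_n => v ord0 (enum_rank x)) (t := fun _ => c x)).
  exact: coord_continuous.
exact: cst_continuous.
exact: IH.
Qed.

Variable (phi : SX -> SY -> R).
Definition G (y : SY) (v : 'rV[R]_n) : R := \sum_x v ord0 (enum_rank x) * phi x y.
Definition Fs s (v : 'rV[R]_n) : R := foldr (fun y acc => Order.min (G y v) acc) 0 s.

Lemma F_cont s : continuous (Fs s).
Proof.
move=> v; rewrite /Fs.
elim: s => [|y s IH] /=.
  exact: cst_continuous.
have H1 : {for v, continuous (G y)} by exact: W_cont.
exact: (continuous_min H1 IH).
Qed.

Lemma F_le s v y : y \in s -> Fs s v <= G y v.
Proof.
elim: s => [|z s IH] //=; rewrite inE => /orP[/eqP->|ys].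
  by rewrite ge_min lexx.
by rewrite ge_min IH ?orbT.
Qed.

Lemma F_cases s v : Fs s v = 0 \/ exists y, Fs s v = G y v.
Proof.
elim: s => [|z s IH] /=; first by left.
case: (leP (G z v) (Fs s v)) => h.
  by right; exists z.
by [].
Qed.



Lemma dichotomy (hX : (0 < #|SX|)%N) :
  (exists t : dist R SX, forall y, 0 <= lin phi (val t) y) \/
  (exists c, 0 < c /\ forall t : dist R SX, exists y, lin phi (val t) y <= - c).
Proof.
case/card_gt0P: (hX) => x0 _.
pose A := [set v : 'rV[R]_n | forall i, `[0,1]%classic (v ord0 i)] `&`
   ((fun v : 'rV[R]_n => \sum_x v ord0 (enum_rank x) * (fun _ => 1) x) @^-1` [set x | x = 1]).
have cA : compact A.
  apply: compact_closedI.
    exact: (rV_compact (fun i => @segment_compact R 0 1)).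
  apply: preimage_closed; last exact: closed_eq.
  by move=> v _; apply: W_cont.
have A0 : A !=set0.
  exists (\row_i (i == enum_rank x0)%:R); split.
    by move=> i /=; rewrite mxE in_itv /= ler0n lern1 leq_b1.
  rewrite /= (bigD1 x0) //= big1 ?mxE ?eqxx ?mulr1 ?addr0 // => x /negbTE xx0.
  by rewrite mxE (inj_eq enum_rank_inj) xx0 mul0r.
have [c cAc cmax] := compact_EVT_max A0 cA (continuous_subspaceT (A:=A) (@F_cont (enum SY))).
have [Fc0|Fc0] := leP 0 (Fs (enum SY) c).
  left.
  move: cAc; rewrite inE => -[cbox csum].
  have Hd : is_dist [ffun x => c ord0 (enum_rank x)].
    apply/andP; split.
      apply/forallP => x; rewrite ffunE; have := cbox (enum_rank x).
      by rewrite /= in_itv /= => /andP[].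
    apply/eqP; rewrite -[RHS]csum; apply: eq_bigr => x _; by rewrite ffunE mulr1.
  exists (exist (fun f => is_dist f) _ Hd) => y /=.
  apply: (le_trans Fc0); apply: (le_trans (F_le c (mem_enum _ y))).
  by rewrite /G /lin le_eqVlt; apply/orP; left; apply/eqP; apply: eq_bigr => x _; rewrite ffunE.
right; exists (- Fs (enum SY) c); split; first by rewrite oppr_gt0.
move=> t; pose v : 'rV[R]_n := \row_i val t (enum_val i).
have vA : v \in A.
  rewrite inE; split.
    by move=> i; rewrite /= mxE in_itv /= dist_le1.
  rewrite /v /=; case: t {v} => f /= /andP[_ /eqP H1]; rewrite -[RHS]H1.
  by apply: eq_bigr => x _; rewrite mxE enum_rankK mulr1.
have Fv := cmax v vA.
have Gv y : G y v = lin phi (val t) y.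
  by apply: eq_bigr => x _; rewrite mxE enum_rankK.
case: (F_cases (enum SY) v) => [F0|[y Fy]].
  by move: Fc0; rewrite ltNge -F0 Fv.
by exists y; rewrite opprK -Gv -Fy.
Qed.
End A.

Lemma sum_tupleS (R : realType) (T : finType) n (F : n.+1.-tuple T -> R) :
  \sum_(h : n.+1.-tuple T) F h = \sum_(x : T) \sum_(h : n.-tuple T) F [tuple of x :: h].
Proof.
rewrite pair_big /=.
rewrite (reindex (fun p : T * n.-tuple T => [tuple of p.1 :: p.2])) //=.
exists (fun h : n.+1.-tuple T => (thead h, [tuple of behead h])).
  by move=> [x h] _ /=; rewrite theadE; congr pair; apply: val_inj.
by move=> h _; rewrite [RHS]tuple_eta.
Qed.

Lemma sum_tuple0 (R : realType) (T : finType) (F : 0.-tuple T -> R) :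
  \sum_(h : 0.-tuple T) F h = F [tuple].
Proof.
rewrite (eq_bigr (fun=> F [tuple])) => [|h _]; last by rewrite tuple0.
by rewrite sumr_const card_tuple expn0.
Qed.

Section B.
Variables (R : realType) (SX SY : finType) (phi : SX -> SY -> R).
Variables (sX : stratX R SX SY) (sY : stratY R SX SY).

Definition w (pre : history SX SY) (p : SX * SY) := val (sX pre) p.1 * val (sY pre) p.2.

Definition E pre t := \sum_(h : t.+1.-tuple (SX * SY))
  prob_from sX sY pre h * phi (tnth h ord_max).1 (tnth h ord_max).2.

Lemma E0 pre : E pre 0 = \sum_p w pre p * phi p.1 p.2.
Proof.
rewrite /E sum_tupleS; apply: eq_bigr => p _.
rewrite sum_tuple0 /= mulr1. done.
Qed.

Lemma ES pre t : E pre t.+1 = \sum_p w pre p * E (rcons pre p) t.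
Proof.
rewrite /E sum_tupleS; apply: eq_bigr => p _.
rewrite mulr_sumr; apply: eq_bigr => h _ /=.
rewrite mulrA; congr (_ * _).
by rewrite !(tnth_nth p).
Qed.

Definition D pre n := \sum_(t < n) E pre t.

Lemma DS pre n : D pre n.+1 = \sum_p w pre p * phi p.1 p.2 + \sum_p w pre p * D (rcons pre p) n.
Proof.
rewrite /D big_ord_recl E0; congr (_ + _).
under eq_bigr do rewrite ES.
rewrite exchange_big /=; apply: eq_bigr => p _.
by rewrite mulr_sumr.
Qed.

Lemma sum_dist (S : finType) (t : dist R S) : \sum_s val t s = 1.
Proof. by case: t => f /= /andP[_ /eqP]. Qed.

Lemma dist_ge0 (S : finType) (t : dist R S) s : 0 <= val t s.
Proof. by case: t => f /= /andP[/forallP H _]. Qed.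

Lemma w_ge0 pre p : 0 <= w pre p.
Proof. by rewrite /w mulr_ge0 ?dist_ge0. Qed.

Lemma sum_wH pre (H : SY -> R) :
  \sum_p w pre p * H p.2 = \sum_y val (sY pre) y * H y.
Proof.
rewrite -(pair_big predT predT (fun x y => w pre (x, y) * H y)) /=.
rewrite exchange_big /=; apply: eq_bigr => y _.
rewrite /w /= -[RHS]mul1r -(sum_dist (sX pre)) !mulr_suml.
by apply: eq_bigr => x _; rewrite mulrA.
Qed.

Lemma sum_w1 pre : \sum_p w pre p = 1.
Proof.
under eq_bigr do rewrite -[w _ _]mulr1.
by rewrite (sum_wH pre (fun=> 1)); under eq_bigr do rewrite mulr1; rewrite sum_dist.
Qed.

Lemma sum_wphi pre :
  \sum_p w pre p * phi p.1 p.2 = \sum_y val (sY pre) y * \sum_x val (sX pre) x * phi x y.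
Proof.
rewrite -(pair_big predT predT (fun x y => w pre (x, y) * phi x y)) /=.
rewrite exchange_big /=; apply: eq_bigr => y _.
rewrite mulr_sumr; apply: eq_bigr => x _; rewrite /w /=; ring.
Qed.

Lemma E_neg c : (forall pre, \sum_p w pre p * phi p.1 p.2 <= - c) ->
  forall t pre, E pre t <= - c.
Proof.
move=> H; elim=> [|t IH] pre; first by rewrite E0.
rewrite ES -[- c]mul1r -(sum_w1 pre) mulr_suml.
by apply: ler_sum => p _; rewrite ler_wpM2l ?w_ge0.
Qed.

Lemma D_neg c : (forall pre, \sum_p w pre p * phi p.1 p.2 <= - c) ->
  forall n pre, D pre n <= - (c * n%:R).
Proof.
move=> H n pre; rewrite /D.
have -> : - (c * n%:R) = \sum_(t < n) (- c) by rewrite sumr_const card_ord mulr_natr mulNrn.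
by apply: ler_sum => t _; apply: E_neg.
Qed.
End B.

Lemma no_cvg_neg (R : realType) (u : nat -> R) c : 0 < c -> (forall T, u T <= - c) ->
  ~ (u @ \oo --> (0 : R)).
Proof.
move=> c0 H cu.
have [N _ HN] := (cvgr0Pnorm_lt u).1 cu c c0.
have := HN N (leqnn N) => /=.
have := H N; rewrite -[u N]opprK lerN2 => h.
by rewrite normrN ltNge (le_trans h (ler_norm _)).
Qed.

Lemma cvg_bounded (R : realType) (D : nat -> R) K : (forall T, `|D T| <= K) ->
  (fun T : nat => (T.+1)%:R^-1 * D T) @ \oo --> (0 : R).
Proof.
move=> HK; apply/cvgr0Pnorm_le => e e0.
have K0 : 0 <= K by apply: le_trans (HK 0%N).
have e'0 : 0 < e / (K + 1) by rewrite divr_gt0 // ltr_wpDl.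
apply: filterS ((cvgr0Pnorm_le _).1 (@cvg_harmonic R) _ e'0) => T /= HT.
rewrite normrM.
apply: (le_trans (ler_pM _ _ HT (HK T))) => //.
rewrite mulrC mulrA ler_pdivrMr ?ltr_wpDl //; nra.
Qed.


Section F.
Variables (R : realType) (SX SY : finType) (phi : SX -> SY -> R).
Variables (tp tm : dist R SX).
Hypothesis Htp : forall y, 0 <= lin phi (val tp) y.
Hypothesis Htm : forall y, lin phi (val tm) y <= 0.
Variable sY : stratY R SX SY.

Let sX := reactive (sigma0 tp tm) (sigmastar Htp Htm).

Fixpoint Cf (pre : history SX SY) n : R :=
  match n with
  | 0 => P phi tp tm pre
  | n'.+1 => \sum_p w sX sY pre p * Cf (rcons pre p) n'
  end.

Lemma Cf01 n : forall pre, 0 <= Cf pre n <= 1.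
Proof.
elim: n => [|n IH] pre /=; first by case: (reactive_P Htp Htm pre).
apply/andP; split.
  by apply: sumr_ge0 => p _; rewrite mulr_ge0 ?w_ge0 //; case/andP: (IH (rcons pre p)).
rewrite -(sum_w1 sX sY pre); apply: ler_sum => p _.
by rewrite ler_piMr ?w_ge0 //; case/andP: (IH (rcons pre p)).
Qed.

Lemma D_eq n : forall pre, D phi sX sY pre n = M phi * (P phi tp tm pre - Cf pre n).
Proof.
elim: n => [|n IH] pre.
  by rewrite /D big_ord0 /= subrr mulr0.
rewrite DS /=.
have [_ Hv] := reactive_P Htp Htm pre.
set q := P phi tp tm pre.
have HPr p : P phi tp tm (rcons pre p) = q - eta phi * lin phi (mix q tp tm) p.2.
  by rewrite /P foldl_rcons -/(P phi tp tm pre) /pstar lin_mix.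
have Hphi : \sum_p w sX sY pre p * phi p.1 p.2 =
    \sum_p w sX sY pre p * lin phi (mix q tp tm) p.2.
  rewrite sum_wphi sum_wH; apply: eq_bigr => y _.
  by rewrite /lin -Hv.
rewrite Hphi.
under eq_bigr do rewrite IH HPr.
rewrite -[q in RHS]mul1r -(sum_w1 sX sY pre) mulr_suml -sumrB mulr_sumr -big_split /=.
apply: eq_bigr => p _.
have M0 := M_gt0 phi.
rewrite /eta.
set L := lin phi _ _; set W := w _ _ _ _; set Cp := Cf _ _.
field.
by rewrite gt_eqF.
Qed.

Lemma D_bound n : `|D phi sX sY [::] n| <= M phi.
Proof.
rewrite D_eq normrM (ger0_norm (ltW (M_gt0 phi))).
apply: ler_piMr; first exact: ltW (M_gt0 phi).
have [/andP[a b] _] := reactive_P Htp Htm [::].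
have /andP[c d] := Cf01 n [::].
rewrite ler_norml; apply/andP; split; lra.
Qed.

Lemma reactive_autocratic_one :
  (fun T : nat => (T.+1)%:R^-1 * \sum_(t < T.+1) exp_payoff phi sX sY t) @ \oo --> (0 : R).
Proof.
apply: (@cvg_bounded R (fun T => D phi sX sY [::] T.+1) (M phi)).
by move=> T; apply: D_bound.
Qed.
End F.

Lemma reactive_autocratic (R : realType) (SX SY : finType) (phi : SX -> SY -> R)
  (tp tm : dist R SX) (Hp : forall y, 0 <= lin phi (val tp) y) (Hm : forall y, lin phi (val tm) y <= 0) :
  autocratic phi (reactive (sigma0 tp tm) (sigmastar Hp Hm)).
Proof. by move=> sY; apply: reactive_autocratic_one. Qed.

Definition dirac (R : realType) (S : finType) (y0 : S) : dist R S.
Proof.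
exists [ffun y => (y == y0)%:R]; apply/andP; split.
  by apply/forallP => y; rewrite ffunE ler0n.
apply/eqP; rewrite (bigD1 y0) //= big1 ?ffunE ?eqxx ?addr0 // => y /negbTE yy0.
by rewrite ffunE yy0.
Defined.

Lemma not_unif (R : realType) (SX SY : finType) (phi : SX -> SY -> R) (sX : stratX R SX SY) :
  autocratic phi sX ->
  ~ (exists c, 0 < c /\ forall t : dist R SX, exists y, lin phi (val t) y <= - c).
Proof.
move=> Ha [c [c0 Hc]].
pose yf pre := projT1 (cid (Hc (sX pre))).
pose sY : stratY R SX SY := fun pre => dirac R (yf pre).
apply: (@no_cvg_neg R _ c c0 _ (Ha sY)) => T.
have Hw : forall pre, \sum_p w sX sY pre p * phi p.1 p.2 <= - c.
  move=> pre; rewrite sum_wphi (bigD1 (yf pre)) //= [X in _ + X]big1 => [|y /negbTE yy]; last first.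
    by rewrite ffunE yy mul0r.
  rewrite addr0 ffunE eqxx mul1r.
  exact: (projT2 (cid (Hc (sX pre)))).
have := D_neg Hw T.+1 [::].
rewrite /D => HD.
have -> : - c = (T.+1%:R)^-1 * - (c * T.+1%:R).
  by rewrite mulrN mulrCA mulVf ?pnatr_eq0 // mulr1.
by rewrite ler_wpM2l ?invr_ge0 ?ler0n.
Qed.

Lemma autocratic_opp (R : realType) (SX SY : finType) (phi : SX -> SY -> R) (sX : stratX R SX SY) :
  autocratic phi sX -> autocratic (fun x y => - phi x y) sX.
Proof.
move=> Ha sY.
have -> : (fun T : nat => (T.+1)%:R^-1 * \sum_(t < T.+1) exp_payoff (fun x y => - phi x y) sX sY t) =
   (fun T : nat => - ((T.+1)%:R^-1 * \sum_(t < T.+1) exp_payoff phi sX sY t)).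
  apply/funext => T; rewrite -mulrN -sumrN; congr (_ * _); apply: eq_bigr => t _.
  by rewrite /exp_payoff -sumrN; apply: eq_bigr => h _; rewrite mulrN.
have H := cvgN (Ha sY). rewrite oppr0 in H. exact: H.
Qed.

Unset Implicit Arguments.

Theorem theorem3 (R : realType) (SX SY : finType)
    (hX : (0 < #|SX|)%N) (hY : (0 < #|SY|)%N)
    (phi : SX -> SY -> R) (sX : stratX R SX SY) :
  autocratic phi sX ->
  exists (sigma0 : dist R SX) (sigmastar : dist R SX -> SY -> dist R SX),
    two_point sigma0 sigmastar /\ autocratic phi (reactive sigma0 sigmastar).
Proof.
move=> Ha.
have [[tp Htp]|Hn] := dichotomy phi hX; last by exfalso; exact: (not_unif Ha).
have [[tm Htm]|Hn] := dichotomy (fun x y => - phi x y) hX; last first.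
  by exfalso; exact: (not_unif (autocratic_opp Ha)).
have Htm' : forall y, lin phi (val tm) y <= 0.
  move=> y; have := Htm y; rewrite /lin.
  by under eq_bigr do rewrite mulrN; rewrite sumrN oppr_ge0.
exists (sigma0 tp tm), (sigmastar Htp Htm'); split.
  exact: two_point_ok.
exact: reactive_autocratic.
Qed.
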